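(* Let $x=(x_n)$ and $y=(y_n)$ be sequences of real numbers such that $\sum_n x_n$ and $\sum_n y_n$ are absolutely convergent. If every point of $E(x)$ has a unique representation, or every point of $E(y)$ has a unique representation, then $E(x,y)$ is a Cantor set.
   Context: For an absolutely convergent series $\sum_n v_n$ in $\mathbb R^d$, its achievement set is $E(v)=\{\sum_{n=1}^\infty \varepsilon_n v_n : (\varepsilon_n)\in\{0,1\}^{\mathbb N}\}$; $E(x,y)$ denotes the achievement set of the sequence $((x_n,y_n))_n$ in $\mathbb R^2$. A point $a$ of $E(v)$ has a unique representation if there is exactly one set $A\subset\mathbb N$ with $a=\sum_{i\in A}v_i$. A Cantor set is a nonempty, totally disconnected, perfect, compact subset of $\mathbb R^n$. *)

(* Defs.v *)
From HB Require Import structures.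
From mathcomp Require Import all_boot all_order all_algebra.
From mathcomp Require Import all_classical all_reals all_analysis.
Set Implicit Arguments. Unset Strict Implicit. Unset Printing Implicit Defensive.
Import Order.TTheory GRing.Theory Num.Theory.
Import numFieldNormedType.Exports.
Local Open Scope classical_set_scope.
Local Open Scope ring_scope.

Definition abs_convergent {R : realType} (x : nat -> R) : Prop :=
  cvgn (series (fun n => `|x n|)).

Definition subsum {R : realType} {V : normedModType R} (v : nat -> V)
  (A : set nat) : V :=
  limn (series (fun n => (n \in A)%:R *: v n)).

(* Achievement set E(v) = { sum_n eps_n v_n : eps in {0,1}^N }; a 0-1 sequence
   eps is identified with the set A = {n | eps_n = 1}. *)
Definition achievement_set {R : realType} {V : normedModType R}
  (v : nat -> V) : set V := [set subsum v A | A in [set: set nat]].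

Definition unique_representation {R : realType} {V : normedModType R}
  (v : nat -> V) (a : V) : Prop :=
  exists! A : set nat, a = subsum v A.

Definition cantor_set {T : topologicalType} (C : set T) : Prop :=
  [/\ C !=set0, totally_disconnected C, perfect_set C & compact C].

(* Main.v *)
Require Import Defs.
From HB Require Import structures.
From mathcomp Require Import all_boot all_order all_algebra.
From mathcomp Require Import all_classical all_reals all_analysis.
Import Order.TTheory GRing.Theory Num.Theory.
Import numFieldNormedType.Exports.
Local Open Scope classical_set_scope.
Local Open Scope ring_scope.
Section S.
Variable R : realType.
Variable x : nat -> R.
Hypothesis hx : cvgn (series (fun n => `|x n|)).

Definition G (b : nat -> bool) : R := limn (series (fun n => (b n)%:R * x n)).
Let s := series (fun n => `|x n|).
Let L := limn s.

Lemma Gcvg (b : nat -> bool) : cvgn (series (fun n => (b n)%:R * x n)).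
Proof.
apply: normed_cvg => /=.
apply: (series_le_cvg _ _ _ hx) => n //=.
rewrite normrM; case: (b n) => /=; rewrite ?normr1 ?normr0 ?mul1r ?mul0r //. 
Qed.

Lemma tail_lim N : limn (series (fun n => (N <= n)%N%:R * `|x n|)) = L - s N.
Proof.
apply: cvg_lim; first exact: norm_hausdorff.
have h1 : (fun m => s m - s N) @ \oo --> L - s N.
  by apply: cvgB => //; exact: cvg_cst.
apply: cvg_trans h1; apply: near_eq_cvg; near=> m.
have Nm : (N <= m)%N by near: m; exists N.
rewrite /s sub_series_geq //= seriesEnat /=.
rewrite (big_cat_nat (leq0n N) Nm) /=.
rewrite [X in _ = X + _]big_nat_cond [X in _ = X + _]big1 ?add0r.
  by apply: eq_big_nat => k /andP[Nk _]; rewrite Nk mul1r.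
by move=> k /andP[/andP[_ kN] _]; rewrite leqNgt kN mul0r.
Unshelve. all: by end_near.
Qed.

Lemma wcvg N : cvgn (series (fun n => (N <= n)%N%:R * `|x n|)).
Proof.
apply: (series_le_cvg _ _ _ hx) => n //=.
by case: (N <= n)%N; rewrite ?mul1r ?mul0r.
Qed.

Lemma Gbound (b1 b2 : nat -> bool) N : (forall i, (i < N)%N -> b1 i = b2 i) ->
  `|G b1 - G b2| <= L - s N.
Proof.
move=> h; rewrite /G -lim_seriesB ?Gcvg //.
have pw : forall n, `|(b1 n)%:R * x n - (b2 n)%:R * x n|
   <= (N <= n)%N%:R * `|x n|.
  move=> n /=; case: (leqP N n) => Nn /=.
    rewrite mul1r -mulrBl normrM.
    by case: (b1 n); case: (b2 n); rewrite /= ?mulr1n ?mulr0n ?subrr ?normr0 ?mul0r ?subr0 ?sub0r ?normrN ?normr1 ?mul1r.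
  by rewrite h // subrr normr0 mul0r.
have cd : cvgn [normed series ((fun n => (b1 n)%:R * x n) - (fun n => (b2 n)%:R * x n))].
  by apply: (series_le_cvg _ _ pw (wcvg N)) => n //=; rewrite mulr_ge0.
apply: le_trans (lim_series_norm cd) _.
rewrite -tail_lim; apply: lim_series_le => //; exact: wcvg.
all: exact: Gcvg.
Qed.
End S.
Arguments G {R}.
Arguments Gbound {R x}.
Arguments Gcvg {R x}.

Lemma agree_nbhs (e : cantor_space) N :
  nbhs e [set e' : cantor_space | forall i, (i < N)%N -> e' i = e i].
Proof.
elim: N => [|N IH].
  rewrite (_ : [set e' | _] = setT); first exact: filterT.
  by rewrite predeqE => e'; split => // _ i.
have hN : nbhs e [set e' : cantor_space | e' N = e N].
  have := @proj_continuous nat (fun _ => bool) N e.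
  move=> /(_ [set e N]) h; apply: h.
  by apply: open_nbhs_nbhs; split; [exact: discrete_open|].
have h := @filterI _ _ (nbhs_filter e) _ _ IH hN.
apply: filterS h => e' [h1 h2] i.
by rewrite ltnS leq_eqVlt => /orP[/eqP->//|]; exact: h1.
Qed.

Lemma G_cont (R : realType) (x : nat -> R) : cvgn (series (fun n => `|x n|)) ->
  continuous (G x : cantor_space -> R).
Proof.
move=> hx e; apply/cvgrPdist_lt => eps epos.
have /cvgrPdist_lt/(_ eps epos) [N _ HN] := hx.
have h := agree_nbhs e N; apply: (@filterS cantor_space (nbhs e) (nbhs_filter e) _ _ _ h) => e' he'.
have hb : forall i, (i < N)%N -> e i = e' i by move=> i iN; rewrite he'.
apply: le_lt_trans (Gbound hx e e' N hb) _.
by apply: le_lt_trans (HN N (leqnn N)); exact: ler_norm.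
Qed.
Arguments G_cont {R x}.

Lemma cantor_image (T : topologicalType) (f : cantor_space -> T) :
  hausdorff_space T -> continuous f -> injective f -> cantor_set (f @` setT).
Proof.
move=> hT hc inj.
have cpt : forall A : set cantor_space, closed A -> compact (f @` A).
  move=> A cA; apply: continuous_compact; first exact: continuous_subspaceT.
  exact: (subclosed_compact cA cantor_space_compact).
have cl : forall A : set cantor_space, closed A -> closed (f @` A).
  by move=> A cA; apply: compact_closed hT (cpt A cA).
split.
- by exists (f (fun _ => false)), (fun _ => false).
- move=> _ [e1 _ <-]; rewrite eqEsubset; split; last first.
    by move=> _ ->; apply: connected_component_refl; exists e1.
  move=> z [C [Cx CS ctdC] Cz].
  have [e2 _ ze2] := CS z Cz; subst z.
  apply: contrapT => /eqP ne.
  have ne' : e1 != e2 by apply/eqP => h; move: ne; rewrite h eqxx.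
  have [U [[oU cU] Ue1 nUe2]] := cantor_zero_dimensional ne'.
  have disj : forall t, (f @` U) t -> (f @` ~` U) t -> False.
    by move=> _ [a Ua <-] [b nUb /inj ba]; subst b.
  have key := ctdC (C `&` (f @` U)).
  have : C `&` (f @` U) = C.
    apply: key.
    - by exists (f e1); split => //; exists e1.
    - exists (~` (f @` ~` U)); first exact: closed_openC (cl _ (open_closedC oU)).
      rewrite eqEsubset; split => t [Ct Kt]; split => //.
        by move=> K2t; exact: disj Kt K2t.
      have [e _ te] := CS t Ct; subst t.
      case: (pselect (U e)) => Ue; first by exists e.
      by exfalso; apply: Kt; exists e.
    - by exists (f @` U); [exact: cl | ].
  move=> h; have : (C `&` (f @` U)) (f e2) by rewrite h.
  by case=> _ [a Ua /inj ae]; subst a.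
- split; first exact: cl _ closedT.
  rewrite eqEsubset; split.
    move=> t /subset_limit_point; rewrite -(closure_id _).1 //; exact: cl _ closedT.
  move=> _ [e _ <-] U nU.
  have [_ lpT] := cantor_perfect.
  have lp : limit_point [set: cantor_space] e by rewrite lpT.
  have [e' [ne' _ Ue']] := lp _ (hc e U nU).
  exists (f e'); split; [|by exists e'|by []].
  by apply/eqP => /inj h; move: ne'; rewrite h eqxx.
- exact: cpt _ closedT.
Qed.

Section Main.
Variable R : realType.
Variables x y : nat -> R.
Hypothesis hx : cvgn (series (fun n => `|x n|)).
Hypothesis hy : cvgn (series (fun n => `|y n|)).

Definition F (e : cantor_space) : R * R := (G x e, G y e).

Lemma F_cont : continuous F.
Proof.
move=> e; have h1 := G_cont hx e; have h2 := G_cont hy e.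
exact: (@cvg_pair _ _ _ _ _ _ (nbhs_filter e) (nbhs_filter _) (nbhs_filter _) _ _ h1 h2).
Qed.

Lemma subsumE (z : nat -> R) A : subsum z A = G z (fun n => n \in A).
Proof. by []. Qed.

Lemma GE (z : nat -> R) (e : cantor_space) : G z e = subsum z [set n | e n].
Proof.
rewrite subsumE; congr G; apply/funext => n.
by apply/idP/idP => [h|/set_mem //]; apply: mem_set.
Qed.

Lemma subsum_pair A :
  subsum (fun n => (x n, y n) : R * R) A = (subsum x A, subsum y A).
Proof.
rewrite /subsum.
have -> : series (fun n => (n \in A)%:R *: ((x n, y n) : R * R)) =
    fun m => (series (fun n => (n \in A)%:R *: x n) m,
              series (fun n => (n \in A)%:R *: y n) m).
  apply/funext; elim => [|m IH]; first by rewrite !seriesEnat /= !big_geq.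
  by rewrite !seriesSr IH.
apply: (@cvg_lim _ (@norm_hausdorff R _) _ _ eventually_filter).
apply: (@cvg_pair _ _ _ _ _ _ eventually_filter (nbhs_filter _) (nbhs_filter _)); [exact: (@Gcvg _ _ hx (fun n => n \in A)) | exact: (@Gcvg _ _ hy (fun n => n \in A))].
Qed.


Lemma achE : achievement_set (fun n => (x n, y n) : R * R) = F @` setT.
Proof.
rewrite eqEsubset; split.
  move=> _ [A _ <-]; exists (fun n => n \in A) => //.
  by rewrite subsum_pair.
move=> _ [e _ <-]; exists [set n | e n] => //.
by rewrite subsum_pair /F !GE.
Qed.

Lemma inj_G (z : nat -> R) :
  (forall a, achievement_set z a -> unique_representation z a) ->
  injective (G z : cantor_space -> R).
Proof.
move=> U e1 e2 h.
have [A [_ uA]] := U (G z e1) (ex_intro2 _ _ [set n | e1 n] I (esym (GE z e1))).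
have h1 := uA _ (GE z e1).
have h2 := uA [set n | e2 n] (etrans h (GE z e2)).
apply/funext => n.
have := congr1 (fun S : set nat => S n) (etrans (esym h1) h2) => /= E.
by apply/idP/idP => hn; [rewrite -E | rewrite E].
Qed.

End Main.

Theorem corollary2p3 (R : realType) (x y : nat -> R) :
  abs_convergent x -> abs_convergent y ->
  ((forall a, achievement_set x a -> unique_representation x a) \/
   (forall a, achievement_set y a -> unique_representation y a)) ->
  cantor_set (achievement_set (fun n => (x n, y n) : R * R)).
Proof.
move=> hx hy hu; rewrite (@achE R x y hx hy).
apply: cantor_image; [exact: norm_hausdorff | exact: (@F_cont R x y hx hy) | ].
move=> e1 e2 [h1 h2].
by case: hu => /inj_G; apply.
Qed.
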